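(* Let $B$ be a nonzero real vector space, $\lfloor\cdot,\cdot\rfloor$ a symmetric bilinear form on $B$, $q(b):=\tfrac12\lfloor b,b\rfloor$, let $f$ be a BC--function on $B$ and $c\in B$. Define $f_c\colon B\to\,]{-}\infty,\infty]$ by $f_c(b):=f(b+c)-\lfloor b,c\rfloor-q(c)$. Then $f_c$ is a BC--function, $\mathrm{dom}\,f_c=\mathrm{dom}\,f-c$ and ${\cal P}_q(f_c)={\cal P}_q(f)-c$.
   Context: For a proper convex $f\colon B\to\,]{-}\infty,\infty]$, $\mathrm{dom}\,f:=\{b\colon f(b)\in\mathbb{R}\}$ and $f^@(c):=\sup_{b\in B}[\lfloor b,c\rfloor-f(b)]$. A BC--function is a proper convex $f$ with $f^@(b)\ge f(b)\ge q(b)$ for all $b\in B$. For $h\ge q$, ${\cal P}_q(h):=\{b\colon h(b)=q(b)\}$. *)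

(* Defs.v *)
From HB Require Import structures.
From mathcomp Require Import all_boot all_order all_algebra.
From mathcomp Require Import all_classical all_reals ereal.
Set Implicit Arguments. Unset Strict Implicit. Unset Printing Implicit Defensive.
Import Order.TTheory GRing.Theory Num.Theory.
Local Open Scope classical_set_scope.
Local Open Scope ring_scope.

Definition symmetric_bilinear (R : realType) (B : lmodType R)
    (bf : B -> B -> R) : Prop :=
  [/\ forall a b, bf a b = bf b a,
      forall (r : R) a b c, bf (r *: a + b) c = r * bf a c + bf b c
    & forall (r : R) a b c, bf c (r *: a + b) = r * bf c a + bf c b].

Definition qf (R : realType) (B : lmodType R) (bf : B -> B -> R) (b : B) : R :=
  bf b b / 2.

Definition edom (R : realType) (B : lmodType R) (f : B -> \bar R) : set B :=
  [set b | f b \is a fin_num].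

Definition proper_convex (R : realType) (B : lmodType R) (f : B -> \bar R)
    : Prop :=
  [/\ forall b, f b != -oo%E,
      exists b, f b \is a fin_num
    & forall (a b : B) (t : R), 0 < t < 1 ->
        (f (t *: a + (1 - t) *: b)%R <= t%:E * f a + (1 - t)%R%:E * f b)%E].

Definition fenchel_at (R : realType) (B : lmodType R) (bf : B -> B -> R)
    (f : B -> \bar R) (c : B) : \bar R :=
  ereal_sup [set ((bf b c)%:E - f b)%E | b in [set: B]].

Definition BC_function (R : realType) (B : lmodType R) (bf : B -> B -> R)
    (f : B -> \bar R) : Prop :=
  proper_convex f /\
  forall b, (fenchel_at bf f b >= f b)%E /\ (f b >= (qf bf b)%:E)%E.

Definition Pq (R : realType) (B : lmodType R) (bf : B -> B -> R)
    (h : B -> \bar R) : set B :=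
  [set b | h b = (qf bf b)%:E].

Definition fshift (R : realType) (B : lmodType R) (bf : B -> B -> R)
    (f : B -> \bar R) (c : B) : B -> \bar R :=
  fun b => (f (b + c)%R - (bf b c)%:E - (qf bf c)%:E)%E.

(* Main.v *)
Require Import Defs.
From HB Require Import structures.
From mathcomp Require Import all_boot all_order all_algebra.
From mathcomp Require Import all_classical all_reals ereal.
From mathcomp Require Import lra.
Import Order.TTheory GRing.Theory Num.Theory.
Local Open Scope classical_set_scope.
Local Open Scope ring_scope.

Section Aux.
Variables (R : realType) (B : lmodType R) (bf : B -> B -> R).
Hypothesis hb : symmetric_bilinear bf.

Lemma bfDl a b c : bf (a + b) c = bf a c + bf b c.
Proof. by case: hb => _ h _; have := h 1 a b c; rewrite scale1r mul1r. Qed.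
Lemma bf0l c : bf 0 c = 0.
Proof. have := bfDl 0 0 c; rewrite addr0 => h; lra. Qed.
Lemma bfZl r a c : bf (r *: a) c = r * bf a c.
Proof. by case: hb => _ h _; have := h r a 0 c; rewrite addr0 bf0l addr0. Qed.
Lemma bfNl a c : bf (- a) c = - bf a c.
Proof. by rewrite -scaleN1r bfZl mulN1r. Qed.
Lemma bfBl a b c : bf (a - b) c = bf a c - bf b c.
Proof. by rewrite bfDl bfNl. Qed.
Lemma bfC a b : bf a b = bf b a.
Proof. by case: hb. Qed.
Lemma bfDr a b c : bf c (a + b) = bf c a + bf c b.
Proof. by rewrite !(bfC c) bfDl. Qed.
Lemma bfBr a b c : bf c (a - b) = bf c a - bf c b.
Proof. by rewrite !(bfC c) bfBl. Qed.
Lemma bfZr r a c : bf c (r *: a) = r * bf c a.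
Proof. by rewrite !(bfC c) bfZl. Qed.

Lemma qD b c : qf bf (b + c) = qf bf b + bf b c + qf bf c.
Proof. rewrite /qf bfDl !bfDr (bfC c b); lra. Qed.

End Aux.

Lemma my_mulry (R : realType) (t : R) : (0 < t)%R -> (t%:E * +oo = +oo)%E.
Proof. by move=> h; rewrite mulry gtr0_sg // mul1e. Qed.

Theorem lemma3p13 (R : realType) (B : lmodType R) (bf : B -> B -> R)
    (f : B -> \bar R) (c : B) :
  (exists b : B, b != 0) ->
  symmetric_bilinear bf ->
  BC_function bf f ->
  [/\ BC_function bf (fshift bf f c),
      edom (fshift bf f c) = [set b - c | b in edom f]
    & Pq bf (fshift bf f c) = [set b - c | b in Pq bf f]].
Proof.
Local Open Scope ereal_scope.
move=> _ hb [[fno [b0 fb0] fcv] fBC].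
have key : forall b, fshift bf f c b = f (b + c)%R - (bf b c)%:E - (qf bf c)%:E by [].
have gq : forall b, fshift bf f c b - (qf bf b)%:E = f (b + c)%R - (qf bf (b + c))%:E.
  move=> b; rewrite key (@qD _ _ _ hb); case: (f (b + c)%R) (fno (b + c)%R) => // r _.
  rewrite -!EFinN -!EFinD; congr EFin; lra.
split.
- split; first split.
  + move=> b; rewrite key; case: (f (b + c)%R) (fno (b + c)%R) => //.
  + exists (b0 - c)%R; rewrite key subrK; case: (f b0) fb0 => //.
  + move=> a b t ht; rewrite !key.
    have -> : (t *: a + (1 - t) *: b + c = t *: (a + c) + (1 - t) *: (b + c))%R.
      by rewrite !scalerDr addrACA -scalerDl subrKC scale1r.
    have H := fcv (a + c)%R (b + c)%R t ht.
    have t0 : (0 < t)%R by case/andP: ht.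
    have t1 : (0 < 1 - t)%R by case/andP: ht => _; rewrite subr_gt0.
    rewrite (@bfDl _ _ _ hb) !(@bfZl _ _ _ hb).
    move: H (fno (a + c)%R) (fno (b + c)%R) (fno (t *: (a + c) + (1 - t) *: (b + c))%R).
    case: (f (a + c)%R) => [ra| |]; case: (f (b + c)%R) => [rb| |];
      case: (f (t *: (a + c) + (1 - t) *: (b + c))%R) => [rm| |] //.
    1: by rewrite -!EFinM -!EFinD lee_fin => H _ _ _; rewrite lee_fin; nra.
    all: try by move=> *; rewrite /= ?my_mulry // /=; exact: leey.
  + move=> d; split.
    * have ub : ubound [set ((bf e (d + c)%R)%:E - f e) | e in [set: B]]
          (fenchel_at bf (fshift bf f c) d + (bf c d + qf bf c)%:E).
        move=> x [e _ <-].
        have Hy : (bf (e - c)%R d)%:E - fshift bf f c (e - c)%R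
            <= fenchel_at bf (fshift bf f c) d.
          by apply: ereal_sup_ubound; exists (e - c)%R.
        rewrite key subrK in Hy.
        move: Hy (fno e); case: (f e) => [r| |] //=; last by move=> *; exact: leNye.
        case: (fenchel_at bf (fshift bf f c) d) => [s| |] //=.
        - rewrite !lee_fin !(@bfBl _ _ _ hb) !(@bfDr _ _ _ hb) (@bfC _ _ _ hb c d) /qf.
          move=> *; lra.
        - by move=> *; exact: leey.
      have Hs := ge_ereal_sup ub.
      have Hf := (fBC (d + c)%R).1.
      rewrite key.
      move: Hs Hf (fno (d + c)%R); rewrite /fenchel_at.
      case: (f (d + c)%R) => [r| |] //=;
      case: (ereal_sup [set ((bf e (d + c)%R)%:E - f e) | e in [set: B]]) => [s| |] //=;
      case: (ereal_sup [set ((bf b d)%:E - fshift bf f c b) | b in [set: B]]) => [u| |] //=.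
      all: try by move=> *; exact: leey.
      all: try by rewrite -!EFinD !lee_fin (@bfC _ _ _ hb c d) => *; lra.
    * have := (fBC (d + c)%R).2; rewrite key (@qD _ _ _ hb).
      case: (f (d + c)%R) => [r| |] //=; last by move=> *; exact: leey.
      rewrite ?(EFinN, EFinD) !lee_fin => *; lra.
- apply/seteqP; split => x /=.
  + rewrite /edom /= key => h; exists (x + c)%R; last by rewrite addrK.
    move: h; rewrite /edom /=; case: (f (x + c)%R) => //.
  + move=> [y hy <-]; rewrite /edom /= key subrK; move: hy; rewrite /edom /=.
    case: (f y) => //.
- apply/seteqP; split => x /=.
  + rewrite /Pq /= key => h; exists (x + c)%R; last by rewrite addrK.
    move: h; rewrite /Pq /= (@qD _ _ _ hb); case: (f (x + c)%R) => //= r.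
    rewrite ?(EFinN, EFinD) => /(congr1 fine) /= h; congr EFin; lra.
  + move=> [y hy <-]; rewrite /Pq /= key; move: hy; rewrite /Pq /=.
    have -> : y = ((y - c) + c)%R by rewrite subrK.
    rewrite (@qD _ _ _ hb) addrK.
    case: (f (y - c + c)%R) => //= r.
    rewrite ?(EFinN, EFinD) => /(congr1 fine) /= h; congr EFin; lra.
Qed.
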